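(* Let $n \geq 4$ and let $S$ be a $4$-cap free, $n$-cup free configuration. Suppose $S$ contains an $(n-1)$-cup $C$ from $x$ to $y$, an $(n-2)$-cup $C_x$ that ends with $x$, and an $(n-2)$-cup $C_y$ that starts with $y$. Then $S$ contains a pair of interweaved laced $(n-1)$-cups.
   Context: A configuration is a finite set $S$ of points with a linear order $<$ and, for every $3$-element subset, an arbitrary assignment declaring it either a cap or a cup. Points $x_1<\cdots<x_a$ form an $a$-cup (resp. $a$-cap) if every consecutive triple $\{x_{i-1},x_i,x_{i+1}\}$, $1<i<a$, is assigned cup (resp. cap); $1$- and $2$-element sets are both caps and cups. The size of a cup is its number of points; a cup $x_1\cdots x_a$ runs from (starts with) $x_1$ to (ends with) $x_a$. Two cups $C_1$, $C_2$ running from $p$ to $r$ and from $q$ to $s$ respectively are interweaved if $p<q\le r<s$. An $(n-1)$-cup $C$ from $p$ to $q$ is laced if there exist a cup $C_p$ ending with $p$ and a cup $C_q$ starting with $q$ such that $|C_p|+|C_q|=n-1$. *)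

(* Defs.v *)
From mathcomp Require Import all_boot.
Set Implicit Arguments. Unset Strict Implicit. Unset Printing Implicit Defensive.

(* A configuration: points 'I_N linearly ordered by <, and
   cupf x y z (for x < y < z) says whether the triple {x,y,z} is a cup
   (true) or a cap (false).  Values on non-increasing triples are irrelevant. *)
Section Config.
Variables (N : nat) (cupf : 'I_N -> 'I_N -> 'I_N -> bool).

Fixpoint triples_ok (P : 'I_N -> 'I_N -> 'I_N -> bool) (s : seq 'I_N) : bool :=
  match s with
  | x :: ((y :: z :: _) as t) => P x y z && triples_ok P t
  | _ => true
  end.

Definition is_cup (s : seq 'I_N) : bool :=
  sorted (fun a b : 'I_N => a < b) s && triples_ok cupf s.

Definition is_cap (s : seq 'I_N) : bool :=
  sorted (fun a b : 'I_N => a < b) s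
  && triples_ok (fun x y z => ~~ cupf x y z) s.

Definition cap_free (a : nat) : Prop := forall s, is_cap s -> size s <> a.
Definition cup_free (a : nat) : Prop := forall s, is_cup s -> size s <> a.

Definition runs (s : seq 'I_N) (p q : 'I_N) : Prop :=
  exists t, s = p :: t /\ last p t = q.

Definition ends_with (s : seq 'I_N) (p : 'I_N) : Prop := exists t, s = rcons t p.
Definition starts_with (s : seq 'I_N) (p : 'I_N) : Prop := exists t, s = p :: t.

Definition laced (n : nat) (C : seq 'I_N) : Prop :=
  is_cup C /\ size C = n.-1 /\
  exists p q, runs C p q /\
    exists Cp Cq, [/\ is_cup Cp, is_cup Cq, ends_with Cp p, starts_with Cq q
                    & size Cp + size Cq = n.-1].

End Config.

(* Main.v *)
Require Import Defs.
From mathcomp Require Import all_boot.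
From mathcomp Require Import zify.
Set Implicit Arguments. Unset Strict Implicit. Unset Printing Implicit Defensive.

Section Aux.
Variables (N : nat) (cupf : 'I_N -> 'I_N -> 'I_N -> bool).

Local Notation is_cup := (is_cup cupf).
Implicit Types (P : 'I_N -> 'I_N -> 'I_N -> bool) (s t w : seq 'I_N) (a b c u v p q z : 'I_N).

Definition hc (P : 'I_N -> 'I_N -> 'I_N -> bool) (u : 'I_N) (w : seq 'I_N) :=
  match w with v :: z :: _ => P u v z | _ => true end.

Lemma tok_cons P u w : triples_ok P (u :: w) = hc P u w && triples_ok P w.
Proof. by case: w => [|v [|z w]]. Qed.

Lemma tok_cat3 P s a b c :
  triples_ok P (s ++ [:: a; b; c]) = triples_ok P (s ++ [:: a; b]) && P a b c.
Proof.
elim: s => [|u s IH]; first by rewrite /= andbT.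
rewrite cat_cons tok_cons IH [in RHS]cat_cons tok_cons andbA.
congr (_ && _ && _).
by case: s {IH} => [|v [|z s]].
Qed.

Lemma tok_prefix P s t : triples_ok P (s ++ t) -> triples_ok P s.
Proof.
elim: s => [|u s IH] //.
rewrite cat_cons !tok_cons => /andP [h1 h2].
rewrite (IH h2) andbT.
by case: s {IH h2} h1 => [|v [|z s]].
Qed.

Lemma cupE_cons a b c s :
  is_cup (a :: b :: c :: s) = [&& a < b, cupf a b c & is_cup (b :: c :: s)].
Proof.
rewrite /is_cup /=.
by case: (a < b); case: (cupf a b c); case: (b < c); case: (path _ _ _);
   case: (triples_ok _ _).
Qed.

Lemma cup_lt12 a b s : is_cup (a :: b :: s) -> a < b.
Proof. by rewrite /is_cup /= => /andP [/andP [] ]. Qed.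

Lemma cup_behead a s : is_cup (a :: s) -> is_cup s.
Proof.
rewrite /is_cup tok_cons => /andP [h1 /andP [_ h2]].
by rewrite h2 andbT; exact: (path_sorted h1).
Qed.

Lemma sorted_rr s a b :
  sorted (fun u v : 'I_N => u < v) (rcons (rcons s a) b) =
  sorted (fun u v : 'I_N => u < v) (rcons s a) && (a < b).
Proof.
case: s => [|u s] /=; first by rewrite andbT.
by rewrite rcons_path last_rcons.
Qed.

Lemma cup_rcons2 s a b c :
  is_cup (rcons (rcons (rcons s a) b) c) =
  [&& b < c, cupf a b c & is_cup (rcons (rcons s a) b)].
Proof.
rewrite /is_cup sorted_rr.
have -> : rcons (rcons (rcons s a) b) c = s ++ [:: a; b; c]
  by rewrite -!cats1 -!catA.
have -> : rcons (rcons s a) b = s ++ [:: a; b] by rewrite -!cats1 -!catA.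
rewrite tok_cat3.
by case: (b < c); case: (cupf a b c); case: (sorted _ _); case: (triples_ok _ _).
Qed.

Lemma cup_prefix s a : is_cup (rcons s a) -> is_cup s.
Proof.
rewrite /is_cup -cats1 => /andP [h1 h2].
rewrite (tok_prefix h2) andbT.
by case: (cat_sorted2 h1).
Qed.

Lemma cup_rr_lt s a b : is_cup (rcons (rcons s a) b) -> a < b.
Proof. by rewrite /is_cup sorted_rr => /andP [/andP [_ ->]]. Qed.

Lemma cup_cons_all a b s : is_cup (b :: s) -> a < b ->
  (forall z : 'I_N, b < z -> cupf a b z) -> is_cup (a :: b :: s).
Proof.
case: s => [|z s] h ab hz.
  by rewrite /is_cup /= ab.
by rewrite cupE_cons ab h hz // (cup_lt12 h).
Qed.

Lemma cup_rcons_all s b c : is_cup (rcons s b) -> b < c ->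
  (forall w : 'I_N, w < b -> cupf w b c) -> is_cup (rcons (rcons s b) c).
Proof.
case/lastP: s => [|s w] h bc hw.
  by rewrite /is_cup /= bc.
by rewrite cup_rcons2 bc h hw // (cup_rr_lt h).
Qed.

Lemma cup_lt_last p u t : is_cup (p :: u :: t) -> p < last u t.
Proof.
rewrite /is_cup => /andP [h _].
have tr : transitive (fun a b : 'I_N => a < b) by move=> ? ? ?; apply: ltn_trans.
have := order_path_min tr h.
move/allP; apply.
exact: mem_last.
Qed.

Lemma head_rcons (z a : 'I_N) s : head z (rcons s a) = head a s.
Proof. by case: s. Qed.

Lemma head_lt s a b : is_cup (rcons (rcons s a) b) -> head a s < b.
Proof.
case: s => [|u s]; first by move/cup_rr_lt.
rewrite /is_cup /= => /andP [h _].
have tr : transitive (fun a b : 'I_N => a < b) by move=> ? ? ?; apply: ltn_trans.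
have := order_path_min tr h.
move/allP; apply.
by rewrite mem_rcons inE eqxx.
Qed.

Lemma cap4 : cap_free cupf 4 -> forall a b c d : 'I_N,
  a < b -> b < c -> c < d -> cupf a b c = false -> cupf b c d.
Proof.
move=> hc a b c d ab bc cd habc.
case E: (cupf b c d) => //.
exfalso; apply: (hc [:: a; b; c; d]) => //.
by rewrite /is_cap /= ab bc cd habc E.
Qed.

Lemma cup1 p : is_cup [:: p].
Proof. by []. Qed.

Lemma laced_intro n s p q Cp Cq : is_cup s -> size s = n.-1 -> runs s p q ->
  is_cup Cp -> is_cup Cq -> ends_with Cp p -> starts_with Cq q ->
  size Cp + size Cq = n.-1 -> laced cupf n s.
Proof.
move=> h1 h2 h3 h4 h5 h6 h7 h8; split; first by [].
split; first by [].
exists p, q; split; first by [].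
by exists Cp, Cq; split.
Qed.

Lemma runs_cons p t : runs (p :: t) p (last p t).
Proof. by exists t. Qed.

Lemma runs_rr s a b : runs (rcons (rcons s a) b) (head a s) b.
Proof.
case: s => [|u s]; first by exists [:: b].
by exists (rcons (rcons s a) b); rewrite last_rcons.
Qed.

Lemma rr3 s : 3 <= size s -> exists D u v z, s = rcons (rcons (rcons D u) v) z.
Proof.
case/lastP: s => [|s z] //; case/lastP: s => [|s v]; rewrite ?size_rcons //.
case/lastP: s => [|s u]; rewrite ?size_rcons // => _.
by exists s, u, v, z.
Qed.

Lemma ends1 p : ends_with [:: p] p.
Proof. by exists [::]. Qed.
Lemma starts1 p : starts_with [:: p] p.
Proof. by exists [::]. Qed.

End Aux.

Theorem lemma5p3 (N : nat) (cupf : 'I_N -> 'I_N -> 'I_N -> bool) (n : nat) :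
  4 <= n ->
  cap_free cupf 4 -> cup_free cupf n ->
  forall (C Cx Cy : seq 'I_N) (x y : 'I_N),
    is_cup cupf C -> size C = n.-1 -> runs C x y ->
    is_cup cupf Cx -> size Cx = n.-2 -> ends_with Cx x ->
    is_cup cupf Cy -> size Cy = n.-2 -> starts_with Cy y ->
  exists (C1 C2 : seq 'I_N) (p q r s : 'I_N),
    [/\ laced cupf n C1, laced cupf n C2, runs C1 p r, runs C2 q s
      & (p < q)%N && (q <= r)%N && (r < s)%N].
Proof.
move=> n4 hcap hcup C Cx Cy x y cC sC [t [EC Ey]] cCx sCx [tx Ex] cCy sCy [ty Ey'].
case: n n4 hcup sC sCx sCy => [|[|[|[|k]]]] // _ hcup sC sCx sCy.
case/lastP: tx Ex => [|Ax a'] Ex; first by subst Cx.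
case: ty Ey' => [|b2 By] Ey'; first by subst Cy.
case: t EC Ey => [|c2 [|c3 R]] EC Ey; try by subst C.
subst C Cx Cy.
simpl in Ey.
have [D [c'' [c' [w ED]]]] := @rr3 N (x :: c2 :: c3 :: R) isT.
have Ew : w = y.
  by have := congr1 (last x) ED; rewrite last_rcons /= Ey => ->.
subst w.
have hx : head c'' D = x.
  by have := congr1 (head x) ED; rewrite !head_rcons /= => ->.
have cC' := cC; rewrite ED cup_rcons2 in cC'.
case/and3P: cC' => c'y hc''c'y cD.
have xc' : x < c' by rewrite -hx; exact: head_lt cD.
have c''c' : c'' < c' := cup_rr_lt cD.
have cC'' := cC; rewrite cupE_cons in cC''.
case/and3P: cC'' => xc2 hxc2c3 cR.
have c2c3 : c2 < c3 := cup_lt12 cR.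
have c2y : c2 < y by rewrite -Ey; exact: cup_lt_last cR.
have xy : x < y by rewrite -Ey; exact: cup_lt_last cC.
have a'x : a' < x := cup_rr_lt cCx.
have px : head a' Ax < x := head_lt cCx.
have cAx : is_cup cupf (rcons Ax a') := cup_prefix cCx.
have yb2 : y < b2 := cup_lt12 cCy.
have ys : y < last b2 By := cup_lt_last cCy.
have cBy : is_cup cupf (b2 :: By) := cup_behead cCy.
have a'c2 : a' < c2 := ltn_trans a'x xc2.
have c'b2 : c' < b2 := ltn_trans c'y yb2.
rewrite /= in sC; rewrite !size_rcons in sCx; rewrite /= in sCy.
have sD : size D = k.
  by have := congr1 size ED; rewrite !size_rcons /= sC; case.
have Fx : cupf a' x c2 = false.
  case E: (cupf a' x c2) => //; exfalso.
  apply: (hcup (a' :: x :: c2 :: c3 :: R)); last by rewrite /= sC.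
  by rewrite cupE_cons a'x E.
have Fy : cupf c' y b2 = false.
  case E: (cupf c' y b2) => //; exfalso.
  apply: (hcup (rcons (rcons (rcons (rcons D c'') c') y) b2)).
    by rewrite cup_rcons2 yb2 E -ED.
  by rewrite !size_rcons sD.
have K : cupf x c' b2.
  have hxc'y : cupf x c' y.
    case E: (cupf x c' y) => //.
    by have := cap4 hcap xc' c'y yb2 E; rewrite Fy.
  case E2: (cupf x c' b2) => //; exfalso.
  have hA : cupf a' x c'.
    case E3: (cupf a' x c') => //.
    by have := cap4 hcap a'x xc' c'b2 E3; rewrite E2.
  apply: (hcup (rcons (rcons (rcons (rcons Ax a') x) c') y)).
    by rewrite cup_rcons2 c'y hxc'y cup_rcons2 xc' hA cCx.
  by rewrite !size_rcons sCx.
have K' : cupf a' c2 y.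
  have hxc2y : cupf x c2 y := cap4 hcap a'x xc2 c2y Fx.
  case E: (cupf a' c2 y) => //; exfalso.
  have h2 := cap4 hcap a'c2 c2y yb2 E.
  apply: (hcup (x :: c2 :: y :: b2 :: By)); last by rewrite /= sCy.
  by rewrite cupE_cons xc2 hxc2y cupE_cons c2y h2 cCy.
case G: (cupf a' x y).
- have cC1 : is_cup cupf (rcons (rcons (rcons Ax a') x) y)
    by rewrite cup_rcons2 xy G cCx.
  have rC1 : runs (rcons (rcons (rcons Ax a') x) y) (head a' Ax) y.
    by have := runs_rr (rcons Ax a') x y; rewrite head_rcons.
  have lC1 : laced cupf k.+4 (rcons (rcons (rcons Ax a') x) y).
    apply: (laced_intro cC1 _ rC1 (cup1 _ _) cCy (ends1 _) (ex_intro _ _ erefl)).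
      by rewrite !size_rcons sCx.
    by rewrite /= sCy.
  case Bt: (cupf c'' c' b2).
  + have cC2 : is_cup cupf (rcons (rcons (rcons D c'') c') b2)
      by rewrite cup_rcons2 c'b2 Bt cD.
    have rC2 : runs (rcons (rcons (rcons D c'') c') b2) x b2.
      by have := runs_rr (rcons D c'') c' b2; rewrite head_rcons hx.
    have lC2 : laced cupf k.+4 (rcons (rcons (rcons D c'') c') b2).
      apply: (laced_intro cC2 _ rC2 cCx (cup1 _ _) (ex_intro _ _ erefl) (starts1 _)).
        by rewrite !size_rcons sD.
      by rewrite !size_rcons sCx addn1.
    exists (rcons (rcons (rcons Ax a') x) y), (rcons (rcons (rcons D c'') c') b2).
    exists (head a' Ax), x, y, b2; split => //.
    by rewrite px (ltnW xy) yb2.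
  + have cC2 : is_cup cupf (x :: c' :: b2 :: By).
      rewrite cupE_cons xc' K /=; apply: cup_cons_all => // z hz.
      exact (cap4 hcap c''c' c'b2 hz Bt).
    have rC2 : runs (x :: c' :: b2 :: By) x (last b2 By) := runs_cons x (c' :: b2 :: By).
    have lC2 : laced cupf k.+4 (x :: c' :: b2 :: By).
      apply: (laced_intro cC2 _ rC2 cCx (cup1 _ _) (ex_intro _ _ erefl) (starts1 _)).
        by rewrite /= sCy.
      by rewrite !size_rcons sCx addn1.
    exists (rcons (rcons (rcons Ax a') x) y), (x :: c' :: b2 :: By).
    exists (head a' Ax), x, y, (last b2 By); split => //.
    by rewrite px (ltnW xy) ys.
- have dl : cupf x y b2 := cap4 hcap a'x xy yb2 G.
  have cC2 : is_cup cupf (x :: y :: b2 :: By) by rewrite cupE_cons xy dl cCy.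
  have rC2 : runs (x :: y :: b2 :: By) x (last b2 By) := runs_cons x (y :: b2 :: By).
  have lC2 : laced cupf k.+4 (x :: y :: b2 :: By).
    apply: (laced_intro cC2 _ rC2 cCx (cup1 _ _) (ex_intro _ _ erefl) (starts1 _)).
      by rewrite /= sCy.
    by rewrite !size_rcons sCx addn1.
  case A: (cupf a' c2 c3).
  + have cC1 : is_cup cupf (a' :: c2 :: c3 :: R) by rewrite cupE_cons a'c2 A cR.
    have rC1 : runs (a' :: c2 :: c3 :: R) a' y.
      by rewrite -Ey; exact: runs_cons a' (c2 :: c3 :: R).
    have lC1 : laced cupf k.+4 (a' :: c2 :: c3 :: R).
      apply: (laced_intro cC1 _ rC1 (cup1 _ _) cCy (ends1 _) (ex_intro _ _ erefl)).
        by rewrite /= sC.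
      by rewrite /= sCy.
    exists (a' :: c2 :: c3 :: R), (x :: y :: b2 :: By).
    exists a', x, y, (last b2 By); split => //.
    by rewrite a'x (ltnW xy) ys.
  + have cC1 : is_cup cupf (rcons (rcons (rcons Ax a') c2) y).
      rewrite cup_rcons2 c2y K'; apply: cup_rcons_all => // w hw.
      case E: (cupf w a' c2) => //.
      by have := cap4 hcap hw a'c2 c2c3 E; rewrite A.
    have rC1 : runs (rcons (rcons (rcons Ax a') c2) y) (head a' Ax) y.
      by have := runs_rr (rcons Ax a') c2 y; rewrite head_rcons.
    have lC1 : laced cupf k.+4 (rcons (rcons (rcons Ax a') c2) y).
      apply: (laced_intro cC1 _ rC1 (cup1 _ _) cCy (ends1 _) (ex_intro _ _ erefl)).
        by rewrite !size_rcons sCx.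
      by rewrite /= sCy.
    exists (rcons (rcons (rcons Ax a') c2) y), (x :: y :: b2 :: By).
    exists (head a' Ax), x, y, (last b2 By); split => //.
    by rewrite px (ltnW xy) ys.
Qed.
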